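(* For $k=o(n)$, $\mathsf{m}^{rd}(+\infty,S_{n,k})=\frac{1+o_k(1)}{2\sqrt{k}}$.
   Context: $S_{n,k}\in\{0,1\}^{\binom{n}{k}\times n}$ is the matrix whose rows are all the distinct vectors in $\{0,1\}^n$ with exactly $k$ ones, each appearing exactly once. For $A\in\{0,1\}^{N\times n}$ and $m\ge0$, unit vectors $U_1,\dots,U_N,V_1,\dots,V_n\in\mathbb{R}^d$ form a margin-$m$, relative-bias-$0$ embedding of $A$ if $\langle U_j,V_i\rangle\ge m$ whenever $A_{ji}=1$ and $\langle U_j,V_i\rangle\le -m$ whenever $A_{ji}=0$. $\mathsf{m}^{rd}(d,A)$ is the supremum of such $m$ in dimension $d$ ($-\infty$ if none), and $\mathsf{m}^{rd}(+\infty,A)=\sup_d\mathsf{m}^{rd}(d,A)$. *)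

(* Defs.v *)
From HB Require Import structures.
From mathcomp Require Import all_boot all_order all_algebra.
From mathcomp Require Import all_classical all_reals ereal.
Set Implicit Arguments. Unset Strict Implicit. Unset Printing Implicit Defensive.
Import Order.TTheory GRing.Theory Num.Theory.
Local Open Scope ring_scope.
Local Open Scope classical_set_scope.

Definition dotp (R : realType) (d : nat) (u v : 'rV[R]_d) : R :=
  \sum_(i < d) u ord0 i * v ord0 i.

(* A binary matrix with rows indexed by a finite type I and n columns
   (row order is irrelevant for the margin). true = 1, false = 0. *)
Definition is_rd_embedding (R : realType) (I : finType) (n d : nat)
    (A : I -> 'I_n -> bool) (U : I -> 'rV[R]_d) (V : 'I_n -> 'rV[R]_d) (m : R) : Prop :=
  (forall j, dotp (U j) (U j) = 1) /\ (forall i, dotp (V i) (V i) = 1) /\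
  (forall j i, if A j i then m <= dotp (U j) (V i) else dotp (U j) (V i) <= - m).

Definition m_rd (R : realType) (I : finType) (n : nat) (d : nat)
    (A : I -> 'I_n -> bool) : \bar R :=
  ereal_sup [set (m%:E)%E | m in [set m : R | 0 <= m /\
     exists U V, is_rd_embedding (d:=d) A U V m]].

Definition m_rd_inf (R : realType) (I : finType) (n : nat)
    (A : I -> 'I_n -> bool) : \bar R :=
  ereal_sup [set m_rd R d A | d in [set: nat]].

(* Rows of S_{n,k}: all k-subsets of {0..n-1}, each exactly once. *)
Definition ksubset (n k : nat) := {S : {set 'I_n} | #|S| == k}.

Definition S_mat (n k : nat) : ksubset n k -> 'I_n -> bool :=
  fun S i => i \in val S.

(* Main.v *)
Require Import Defs.
From HB Require Import structures.
From mathcomp Require Import all_boot all_order all_algebra.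
From mathcomp Require Import all_classical all_reals ereal.
From mathcomp Require Import fingroup perm ring lra.
Import Order.TTheory GRing.Theory Num.Theory.
Local Open Scope ring_scope.

Section Dot.
Variable R : realType.

Lemma dotpC d (u v : 'rV[R]_d) : dotp u v = dotp v u.
Proof. by rewrite /dotp; apply: eq_bigr => i _; rewrite mulrC. Qed.

Lemma dotp_sumr d (I : finType) (u : 'rV[R]_d) (a : I -> R) (v : I -> 'rV[R]_d) :
  dotp u (\sum_i a i *: v i) = \sum_i a i * dotp u (v i).
Proof.
rewrite /dotp.
under eq_bigr => j _ do rewrite summxE mulr_sumr.
rewrite exchange_big /=; apply: eq_bigr => i _.
rewrite mulr_sumr; apply: eq_bigr => j _.
by rewrite mxE mulrCA.
Qed.

Lemma dotp_sum2 d (I : finType) (a : I -> R) (v : I -> 'rV[R]_d) :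
  dotp (\sum_i a i *: v i) (\sum_i a i *: v i) =
  \sum_i \sum_j a i * a j * dotp (v i) (v j).
Proof.
rewrite dotp_sumr; apply: eq_bigr => j _.
rewrite dotpC dotp_sumr mulr_sumr; apply: eq_bigr => i _.
by rewrite dotpC mulrCA mulrA [a j * _]mulrC.
Qed.

Lemma dotp_ge0 d (u : 'rV[R]_d) : 0 <= dotp u u.
Proof. by apply: sumr_ge0 => i _; rewrite -expr2 sqr_ge0. Qed.

Lemma dotp_quad d (u w : 'rV[R]_d) (a : R) :
  0 <= a ^+ 2 * dotp u u - 2 * a * dotp u w + dotp w w.
Proof.
have -> : a ^+ 2 * dotp u u - 2 * a * dotp u w + dotp w w =
  \sum_i (a * u ord0 i - w ord0 i) ^+ 2.
  rewrite /dotp !mulr_sumr -sumrN -!big_split /=; apply: eq_bigr => i _.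
  by rewrite sqrrB; ring.
by apply: sumr_ge0 => i _; rewrite sqr_ge0.
Qed.
End Dot.

Section Sym.
Variable R : realType.
Variables n k : nat.

Definition wS (S : ksubset n k) (i : 'I_n) : R :=
  if i \in val S then n%:R - k%:R else - k%:R.
Definition Mx (i j : 'I_n) : R := \sum_S wS S i * wS S j.

Lemma kact_proof (s : {perm 'I_n}) (S : ksubset n k) : #|s @: val S| == k.
Proof. by rewrite card_imset ?(valP S) //; exact: perm_inj. Qed.
Definition kact s S : ksubset n k := exist (fun A : {set 'I_n} => #|A| == k) _ (kact_proof s S).

Lemma kact_inj s : injective (kact s).
Proof.
move=> S S' /(congr1 val) /= /(imset_inj (@perm_inj _ s)) H.
exact: val_inj.
Qed.

Lemma Mx_perm (s : {perm 'I_n}) i j : Mx (s i) (s j) = Mx i j.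
Proof.
rewrite /Mx (reindex_inj (kact_inj s)); apply: eq_bigr => S _.
by rewrite /wS /= !mem_imset //; exact: perm_inj.
Qed.

Lemma pair_trans (i j i' j' : 'I_n) : i != j -> i' != j' ->
  exists s : {perm 'I_n}, s i = i' /\ s j = j'.
Proof.
move=> hij hij'.
set t := tperm i i'.
set j2 := t j.
have hj2 : i' != j2.
  apply/eqP => E; move: hij.
  have E2 : t i = t j by rewrite /t tpermL.
  by move/perm_inj: E2 => ->; rewrite eqxx.
exists (t * tperm j2 j')%g; split; rewrite permM.
  by rewrite tpermL tpermD // eq_sym.
by rewrite tpermL.
Qed.

Lemma Mx_const i j i' j' : i != j -> i' != j' -> Mx i j = Mx i' j'.
Proof.
move=> h h'; have [s [<- <-]] := pair_trans _ _ _ _ h h'.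
by rewrite Mx_perm.
Qed.

Lemma sum_if (A : {set 'I_n}) (a b : R) :
  \sum_i (if i \in A then a else b) = a * #|A|%:R + b * (n - #|A|)%:R.
Proof.
rewrite (bigID (fun i => i \in A)) /=.
under eq_bigr => i hi do rewrite hi.
rewrite [\sum_(i < n | i \notin A) _](eq_bigr (fun _ => b)); last by move=> i /negbTE ->.
rewrite sumr_const.
rewrite (sumr_const [pred i | i \notin A]).
have -> : #|[pred i | i \notin A]| = (n - #|A|)%N.
  have -> : #|[pred i | i \notin A]| = #|~: A| by apply: eq_card => i; rewrite !inE.
  by rewrite -{1}(addKn #|A| #|~: A|) cardsC card_ord.
by rewrite !mulr_natr. Qed.

Lemma sum_wS (S : ksubset n k) : (k <= n)%N -> \sum_i wS S i = 0.
Proof.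
move=> kn; rewrite /wS sum_if.
have hS : #|val S| = k := eqP (valP S).
rewrite hS natrB //; ring.
Qed.

Lemma sum_wS2 (S : ksubset n k) : (k <= n)%N ->
  \sum_i wS S i ^+ 2 = k%:R * (n%:R - k%:R) * n%:R.
Proof.
move=> kn; rewrite /wS.
under eq_bigr => i _ do rewrite (fun_if (fun x => x ^+ 2)).
rewrite sum_if.
have hS : #|val S| = k := eqP (valP S).
rewrite hS natrB //; ring.
Qed.
End Sym.
Arguments wS {R n k}.
Arguments Mx {R n} k.

Section Upper.
Variable R : realType.

Lemma upper_bound n k d (U : ksubset n k -> 'rV[R]_d) (V : 'I_n -> 'rV[R]_d) (m : R) :
  (0 < k)%N -> (k < n)%N -> 0 <= m -> is_rd_embedding (@S_mat n k) U V m ->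
  4 * k%:R * (n%:R - k%:R) * (n%:R - 1) * m ^+ 2 <= n%:R ^+ 2.
Proof.
move=> k0 kn m0 [HU [HV HM]].
have kn' : (k <= n)%N by apply: ltnW.
have hk : 0 < k%:R :> R by rewrite ltr0n.
have hnk : 0 < n%:R - k%:R :> R by rewrite subr_gt0 ltr_nat.
have hn1 : 0 < n%:R - 1 :> R.
  rewrite subr_gt0 -[1]/(1%:R) ltr_nat; exact: leq_ltn_trans k0 kn.
set a := 2 * k%:R * (n%:R - k%:R) * m.
have a0 : 0 <= a by rewrite /a !mulr_ge0 // ?ltW.
pose W (S : ksubset n k) := \sum_(i < n) wS S i *: V i.
pose G (i j : 'I_n) := dotp (V i) (V j).
have step1 : forall S, a <= dotp (U S) (W S).
  move=> S; rewrite dotp_sumr.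
  have -> : a = \sum_i (if i \in val S then (n%:R - k%:R) * m else k%:R * m).
    rewrite sum_if (eqP (valP S)) natrB // /a; ring.
  apply: ler_sum => i _.
  have := HM S i; rewrite /S_mat /wS; case: (i \in val S) => h.
    by rewrite ler_wpM2l // ltW.
  nra.
have step2 : forall S, a ^+ 2 <= dotp (W S) (W S).
  move=> S; have := @dotp_quad _ _ (U S) (W S) a; rewrite HU.
  have := step1 S; nra.
have step3 : \sum_(S : ksubset n k) dotp (W S) (W S) = \sum_(i < n) \sum_(j < n) Mx k i j * G i j.
  rewrite /W (eq_bigr (fun S => \sum_i \sum_j wS S i * wS S j * G i j)); last first.
    by move=> S _; rewrite dotp_sum2.
  rewrite exchange_big; apply: eq_bigr => i _.
  rewrite exchange_big; apply: eq_bigr => j _.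
  by rewrite /Mx mulr_suml.
have n2 : (1 < n)%N by apply: leq_ltn_trans kn.
pose i0 : 'I_n := Ordinal (ltnW n2).
pose j0 : 'I_n := Ordinal n2.
have ij0 : i0 != j0 by [].
pose E : R := Mx k i0 j0.
have step4 : forall (F : 'I_n -> 'I_n -> R) i, F i i = 1 ->
    \sum_(j < n) Mx k i j * F i j = Mx k i i + E * (\sum_(j < n) F i j - 1).
  move=> F i Fii.
  rewrite (bigD1 i) //= [in RHS](bigD1 i) //= Fii mulr1; congr (_ + _).
  rewrite [1 + _]addrC addrK mulr_sumr; apply: eq_bigr => j hj.
  by rewrite (@Mx_const R n k i j i0 j0) // eq_sym.
pose N := #|{: ksubset n k}|.
have N0 : (0 < N)%N.
  rewrite /N card_sig.
  have -> : #|[pred x : {set 'I_n} | #|x| == k]| = #|[set A : {set 'I_n} | #|A| == k]|.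
    by apply: eq_card => A; rewrite !inE.
  by rewrite card_draws card_ord bin_gt0.
pose Q := (N%:R * (k%:R * (n%:R - k%:R) * n%:R)) : R.
have step5 : \sum_(i < n) Mx k i i = Q.
  rewrite /Mx exchange_big /=.
  rewrite (eq_bigr (fun _ => k%:R * (n%:R - k%:R) * n%:R)); last first.
    by move=> S _; rewrite -(@sum_wS2 R n k S kn'); apply: eq_bigr => i _; rewrite expr2.
  by rewrite sumr_const /Q /N [in RHS]mulr_natl; congr (_ *+ _); apply: eq_card.
have step6 : Q + E * (n%:R * (n%:R - 1)) = 0.
  have H0 : \sum_(i < n) \sum_(j < n) Mx k i j = 0 :> R.
    rewrite /Mx.
    rewrite (eq_bigr (fun i : 'I_n => \sum_(S : ksubset n k) \sum_(j < n) (wS S i * wS S j : R))); last first.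
      by move=> i _; rewrite exchange_big.
    rewrite exchange_big /=; apply: big1 => S _.
    rewrite (eq_bigr (fun i : 'I_n => (wS S i : R) * \sum_(j < n) wS S j)); last first.
      by move=> i _; rewrite mulr_sumr.
    by rewrite (@sum_wS R n k S kn') big1 // => i _; rewrite mulr0.
  rewrite -H0 (eq_bigr (fun i => Mx k i i + E * (n%:R - 1))); last first.
    move=> i _; have := step4 (fun _ _ => 1) i erefl.
    rewrite sumr_const card_ord => <-.
    by apply: eq_bigr => j _; rewrite mulr1.
  rewrite big_split /= step5 -mulr_sumr sumr_const card_ord.
  by rewrite mulr_natl.
pose D := dotp (\sum_(i < n) 1 *: V i) (\sum_(i < n) 1 *: V i).
have D0 : 0 <= D by apply: dotp_ge0.
have step7 : \sum_(i < n) \sum_(j < n) Mx k i j * G i j = Q + E * (D - n%:R).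
  rewrite (eq_bigr (fun i => Mx k i i + E * (\sum_(j < n) G i j - 1))); last first.
    by move=> i _; rewrite step4 // /G HV.
  rewrite big_split /= step5 -mulr_sumr sumrB sumr_const card_ord.
  rewrite /D dotp_sum2.
  congr (_ + _ * (_ - _)).
  by apply: eq_bigr => i _; apply: eq_bigr => j _; rewrite !mul1r.
have step8 : N%:R * a ^+ 2 <= Q + E * (D - n%:R).
  rewrite -step7 -step3 mulr_natl.
  have -> : a ^+ 2 *+ N = \sum_(S : ksubset n k) a ^+ 2.
    by rewrite sumr_const; congr (_ *+ _); apply: eq_card.
  by apply: ler_sum => S _; apply: step2.
have EQ : E * (n%:R * (n%:R - 1)) = - Q by apply/eqP; rewrite -subr_eq0 opprK addrC step6.
have Q0 : 0 <= Q by rewrite /Q !mulr_ge0 // ?ltW.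
have E0 : E <= 0.
  have hnn : 0 < n%:R * (n%:R - 1) :> R by rewrite mulr_gt0 // (lt_trans hk) // ltr_nat.
  nra.
have NN : 0 < N%:R :> R by rewrite ltr0n.
have step9 : (n%:R - 1) * a ^+ 2 <= k%:R * (n%:R - k%:R) * n%:R ^+ 2.
  rewrite -(ler_pM2l NN).
  have : (n%:R - 1) * (N%:R * a ^+ 2) <= (n%:R - 1) * (Q + E * (D - n%:R)).
    by rewrite ler_pM2l.
  move: EQ; rewrite /Q; nra.
have kk : 0 < k%:R * (n%:R - k%:R) :> R by rewrite mulr_gt0.
rewrite -(ler_pM2l kk).
move: step9; rewrite /a; nra.
Qed.
End Upper.

Section Lower.
Variable R : realType.

Lemma dotp_row_mx p q (a a' : 'rV[R]_p) (b b' : 'rV[R]_q) :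
  dotp (row_mx a b) (row_mx a' b') = dotp a a' + dotp b b'.
Proof.
rewrite /dotp big_split_ord /=; congr (_ + _); apply: eq_bigr => j _.
  by rewrite !row_mxEl.
by rewrite !row_mxEr.
Qed.

Lemma dotp_const1 (x y : R) : dotp (\row_(j < 1) x) (\row_(j < 1) y) = x * y.
Proof. by rewrite /dotp big_ord1 !mxE. Qed.

Lemma if0M (b : bool) (x y : R) : (if b then x else 0) * (if b then y else 0) = if b then x * y else 0.
Proof. by case: b; rewrite ?mul0r. Qed.

Lemma sum_if1 n (A : {set 'I_n}) (i : 'I_n) (x y : R) :
  \sum_(j < n) (if j \in A then x else 0) * (if j \in [set i] then y else 0) =
  if i \in A then x * y else 0.
Proof.
rewrite (bigD1 i) //= big1 ?addr0; first by rewrite inE eqxx; case: (i \in A); rewrite ?mul0r.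
by move=> j /negbTE hj; rewrite inE hj mulr0.
Qed.

Lemma lower_embed n k : (0 < k)%N -> (k <= n)%N ->
  exists U V, is_rd_embedding (d := (n + 1)%N) (@S_mat n k) U V
     (1 / (1 + 2 * Num.sqrt (k%:R : R))).
Proof.
move=> k0 kn.
set r := Num.sqrt (k%:R : R).
have r0 : 0 < r by rewrite sqrtr_gt0 ltr0n.
have rr : r ^+ 2 = k%:R by rewrite sqr_sqrtr // ler0n.
set m0 := 1 / (1 + 2 * r).
have m0p : 0 < m0 by rewrite divr_gt0 //; lra.
have m01 : m0 <= 1 by rewrite ler_pdivrMr; lra.
have m0e : m0 * (1 + 2 * r) = 1 by rewrite /m0 mul1r mulVf //; lra.
set s := Num.sqrt m0.
set c := Num.sqrt (1 - m0).
have ss : s ^+ 2 = m0 by rewrite sqr_sqrtr // ltW.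
have cc : c ^+ 2 = 1 - m0 by rewrite sqr_sqrtr // subr_ge0.
pose U (S : ksubset n k) : 'rV[R]_(n + 1) :=
  row_mx (\row_(j < n) (if j \in val S then c / r else 0)) (\row_(j < 1) (- s)).
pose V (i : 'I_n) : 'rV[R]_(n + 1) :=
  row_mx (\row_(j < n) (if j \in [set i] then c else 0)) (\row_(j < 1) s).
exists U, V; split; [|split].
- move=> S; rewrite /U dotp_row_mx dotp_const1 /dotp.
  under eq_bigr => j _ do rewrite !mxE if0M.
  rewrite (@sum_if R n) (eqP (valP S)) mul0r addr0 mulrNN.
  have -> : c / r * (c / r) * k%:R = c ^+ 2.
    by rewrite -rr; field; exact: lt0r_neq0.
  rewrite -expr2 ss cc; lra.
- move=> i; rewrite /V dotp_row_mx dotp_const1 /dotp.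
  under eq_bigr => j _ do rewrite !mxE if0M.
  rewrite (@sum_if R n) cards1 mul0r addr0 mulr1 -!expr2 cc ss; lra.
- move=> S i; rewrite /U /V dotp_row_mx dotp_const1 /dotp /S_mat.
  under eq_bigr => j _ do rewrite !mxE.
  rewrite sum_if1; case: (i \in val S).
    have h : 1 - m0 = 2 * m0 * r by move: m0e; rewrite mulrDr mulr1; lra.
    rewrite mulrAC -expr2 cc h mulfK ?lt0r_neq0 // mulNr -expr2 ss; lra.
  rewrite add0r mulNr -expr2 ss; lra.
Qed.
End Lower.

Theorem corollary1p1 (R : realType) :
  forall eps : R, 0 < eps ->
  exists (K : nat) (delta : R), 0 < delta /\
    forall n k : nat, (K <= k)%N -> k%:R <= delta * n%:R ->
      exists m : R, (m_rd_inf R (@S_mat n k)) = (m%:E)%E /\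
        `| 2 * Num.sqrt (k%:R) * m - 1 | <= eps.
Proof.
move=> e e0.
have e2 : 0 <= 1 / e ^+ 2 by rewrite divr_ge0 // sqr_ge0.
pose K := (Num.Def.archi_bound (1 / e ^+ 2)).+1.
exists K, (e / (1 + e)); split; first by rewrite divr_gt0 //; lra.
move=> n k hK hkn.
have k0 : (0 < k)%N := leq_trans (ltn0Sn _) hK.
have hkR : 1 / e ^+ 2 < k%:R.
  apply: lt_le_trans (archi_boundP e2) _.
  by rewrite ler_nat; apply: ltnW.
have k1 : 1 <= k%:R :> R by rewrite -[1]/(1%:R) ler_nat.
have h1 : k%:R * (1 + e) <= e * n%:R.
  by move: hkn; rewrite mulrAC ler_pdivlMr //; lra.
have kn : (k < n)%N.
  rewrite -(ltr_nat R); nra.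
set r := Num.sqrt (k%:R : R).
have r0 : 0 < r by rewrite sqrtr_gt0 ltr0n.
have rr : r ^+ 2 = k%:R by rewrite sqr_sqrtr // ler0n.
pose B := (1 + e) / (2 * r).
have bnd : forall m : R, 0 <= m -> 4 * k%:R * (n%:R - k%:R) * (n%:R - 1) * m ^+ 2 <= n%:R ^+ 2 ->
    m <= B.
  move=> m m0 hm.
  have hnk : 0 < n%:R - k%:R :> R by rewrite subr_gt0 ltr_nat.
  have hn1 : 0 < n%:R - 1 :> R by nra.
  have a1 : n%:R <= (n%:R - k%:R) * (1 + e) by nra.
  have a2 : n%:R <= (n%:R - 1) * (1 + e) by nra.
  have a3 : n%:R ^+ 2 <= (n%:R - k%:R) * (n%:R - 1) * (1 + e) ^+ 2.
    have n0 : 0 <= n%:R :> R by rewrite ler0n.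
    have := ler_pM n0 n0 a1 a2; rewrite -expr2 => h; apply: (le_trans h); nra.
  have a4 : 4 * k%:R * m ^+ 2 <= (1 + e) ^+ 2.
    have hp : 0 < (n%:R - k%:R) * (n%:R - 1) :> R by apply: mulr_gt0.
    rewrite -(ler_pM2l hp); nra.
  have a5 : 2 * r * m <= 1 + e.
    have : (2 * r * m) ^+ 2 <= (1 + e) ^+ 2 by rewrite exprMn exprMn rr; nra.
    nra.
  by rewrite /B ler_pdivlMr ?mulr_gt0 // mulrC.
have ubd : forall d, (m_rd R d (@S_mat n k) <= B%:E)%E.
  move=> d; apply: ge_ereal_sup => y [m [m0 [U [V H]]] <-]; rewrite lee_fin.
  exact: (bnd m m0 (@upper_bound R n k d U V m k0 kn m0 H)).
have ub : (m_rd_inf R (@S_mat n k) <= B%:E)%E.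
  by apply: ge_ereal_sup => y [d _ <-]; exact: ubd.
have L0 : 0 <= 1 / (1 + 2 * r) by rewrite divr_ge0 //; lra.
have lb : ((1 / (1 + 2 * r))%:E <= m_rd_inf R (@S_mat n k))%E.
  apply: (@le_trans _ _ (m_rd R (n + 1) (@S_mat n k))).
    apply: ereal_sup_ubound; exists (1 / (1 + 2 * r)) => //; split => //.
    exact: lower_embed k0 (ltnW kn).
  by apply: ereal_sup_ubound; exists (n + 1)%N.
move: ub lb; case: (m_rd_inf R (@S_mat n k)) => [x | | ] //= ub lb.
exists x; split => //.
rewrite lee_fin in ub; rewrite lee_fin in lb.
have ke : 1 < k%:R * e ^+ 2.
  by move: hkR; rewrite ltr_pdivrMr ?exprn_gt0 // mulrC.
have re : 1 < r * e.
  have : 1 < (r * e) ^+ 2 by rewrite exprMn rr.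
  have pe : 0 < r * e by apply: mulr_gt0.
  nra.
rewrite ler_norml; apply/andP; split.
  move: lb; rewrite ler_pdivrMr; last by lra.
  nra.
move: ub; rewrite /B ler_pdivlMr ?mulr_gt0 //.
nra.
Qed.
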